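(* Let $(t:\mathcal L_1\to\mathcal L_0,\llbracket\cdot_\lambda\cdot\rrbracket,\mathcal N_0,\mathcal N_1)$ be a strict $2$-term Nijenhuis $\mathcal L_\infty$-conformal algebra. Then $(\mathcal L_0\oplus\mathcal L_1,[\cdot_\lambda\cdot],\mathcal N_0\oplus\mathcal N_1)$ is a Nijenhuis Lie conformal algebra, where $$[(p,m)_\lambda(q,n)]:=\big(\llbracket p_\lambda q\rrbracket,\ \llbracket p_\lambda n\rrbracket-\llbracket q_{-\partial-\lambda}m\rrbracket+\llbracket t(m)_\lambda n\rrbracket\big),\qquad (p,m),(q,n)\in\mathcal L_0\oplus\mathcal L_1 .$$
   Context: All spaces are over $\mathbb C$. A Lie conformal algebra is a $\mathbb C[\partial]$-module with a $\mathbb C$-bilinear $\lambda$-bracket satisfying $[\partial a_\lambda b]=-\lambda[a_\lambda b]$, $[a_\lambda\partial b]=(\partial+\lambda)[a_\lambda b]$, $[a_\lambda b]=-[b_{-\partial-\lambda}a]$, $[a_\lambda[b_\mu c]]=[[a_\lambda b]_{\lambda+\mu}c]+[b_\mu[a_\lambda c]]$; a Nijenhuis operator is a $\mathbb C[\partial]$-linear $\mathcal N$ with $[\mathcal N(p)_\lambda\mathcal N(q)]=\mathcal N([\mathcal N(p)_\lambda q]+[p_\lambda\mathcal N(q)]-\mathcal N([p_\lambda q]))$, and a Nijenhuis Lie conformal algebra is a Lie conformal algebra with a Nijenhuis operator. A strict $2$-term Nijenhuis $\mathcal L_\infty$-conformal algebra consists of a $\mathbb C[\partial]$-linear map $t:\mathcal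 L_1\to\mathcal L_0$, conformal sesquilinear $\mathbb C$-bilinear brackets $\llbracket\cdot_\lambda\cdot\rrbracket$: $\mathcal L_0\otimes\mathcal L_0\to\mathcal L_0[\lambda]$, $\mathcal L_0\otimes\mathcal L_1\to\mathcal L_1[\lambda]$, $\mathcal L_1\otimes\mathcal L_0\to\mathcal L_1[\lambda]$ (with $\llbracket m_\lambda n\rrbracket=0$ on $\mathcal L_1$), and $\mathbb C[\partial]$-linear $\mathcal N_0:\mathcal L_0\to\mathcal L_0$, $\mathcal N_1:\mathcal L_1\to\mathcal L_1$, such that for all $p,q,r\in\mathcal L_0$, $m,n\in\mathcal L_1$: $\llbracket p_\lambda m\rrbracket=-\llbracket m_{-\partial-\lambda}p\rrbracket$; $\llbracket p_\lambda q\rrbracket=-\llbracket q_{-\partial-\lambda}p\rrbracket$; $t\llbracket p_\lambda m\rrbracket=\llbracket p_\lambda t(m)\rrbracket$; $\llbracket t(m)_\lambda n\rrbracket=\llbracket m_\lambda t(n)\rrbracket$; $\llbracket p_\lambda\llbracket q_\mu r\rrbracket\rrbracket-\llbracket\llbracket p_\lambda q\rrbracket_{\lambda+\mu}r\rrbracket-\llbracket q_\mu\llbracket p_\lambda r\rrbracket\rrbracket=0$; $\llbracket p_\lambda\llbracket q_\mu m\rrbracket\rrbracket-\llbracket\llbracket p_\lambda q\rrbracket_{\lambda+\mu}m\rrbracket-\llbracket q_\mu\llbracket p_\lambda m\rrbracket\rrbracket=0$; $t\circ\mathcal N_1=\mathcal N_0\circ t$; $\mathcal N_0(\llbracket\mathcal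 N_0(p)_\lambda q\rrbracket+\llbracket p_\lambda\mathcal N_0(q)\rrbracket-\mathcal N_0\llbracket p_\lambda q\rrbracket)=\llbracket\mathcal N_0(p)_\lambda\mathcal N_0(q)\rrbracket$; $\mathcal N_1(\llbracket\mathcal N_0(p)_\lambda m\rrbracket+\llbracket p_\lambda\mathcal N_1(m)\rrbracket-\mathcal N_1\llbracket p_\lambda m\rrbracket)=\llbracket\mathcal N_0(p)_\lambda\mathcal N_1(m)\rrbracket$. *)

(* Defs.v *)
From mathcomp Require Import all_boot all_algebra.
From mathcomp Require Import complex Rstruct.
Set Implicit Arguments. Unset Strict Implicit. Unset Printing Implicit Defensive.
Import GRing.Theory.
Local Open Scope ring_scope.

Definition Cplx : fieldType := complex Rdefinitions.R.

(* Polynomials in one variable lambda with coefficients in a module L:  *)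
(* a lambda-bracket returns a coefficient list s : seq L, representing *)
(* sum_j lambda^j s`_j.  Two polynomials are equal iff all their       *)
(* coefficients agree, so identities are stated coefficientwise via    *)
(* [pc s j] = coefficient of lambda^j (0 beyond the list).             *)
Definition pc (L : zmodType) (s : seq L) (j : nat) : L := nth 0 s j.

(* multiplication by lambda, on coefficient functions *)
Definition lam (L : zmodType) (f : nat -> L) : nat -> L :=
  fun j => if j is j'.+1 then f j' else 0.

(* Given s representing P(lambda) = sum_k lambda^k s_k, [negsub D s]   *)
(* is the coefficient function of P(-D-lambda) = sum_k (-D-lambda)^k s_k,*)
(* computed by Horner's scheme: P = s_0 + X (s_1 + X (...)), X := -D-lambda. *)
Definition negsub (L : zmodType) (D : L -> L) (s : seq L) : nat -> L :=
  foldr (fun c r j => (if j == 0%N then c else 0) - D (r j) - lam r j)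
        (fun _ => 0) s.

(* Given s representing P(nu) = sum_l nu^l s_l, [sub2 s i j] is the    *)
(* coefficient of lambda^i mu^j in P(lambda+mu) (binomial expansion).  *)
Definition sub2 (L : zmodType) (s : seq L) (i j : nat) : L :=
  pc s (i + j) *+ 'C(i + j, i).

(* Lie conformal algebras.  A C[∂]-module is a K-module L together with *)
(* a K-linear endomorphism D (the action of ∂).                         *)
Section LCA.
Variables (K : pzRingType) (L : lmodType K).

Definition lbilinear (L1 L2 L3 : lmodType K) (br : L1 -> L2 -> seq L3) : Prop :=
  (forall (k : K) a a' b j, pc (br (k *: a + a') b) j = k *: pc (br a b) j + pc (br a' b) j)
  /\ (forall (k : K) a b b' j, pc (br a (k *: b + b')) j = k *: pc (br a b) j + pc (br a b') j).

Definition sesquilinear (L1 L2 L3 : lmodType K) (D1 : L1 -> L1) (D2 : L2 -> L2)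
    (D3 : L3 -> L3) (br : L1 -> L2 -> seq L3) : Prop :=
  (forall a b j, pc (br (D1 a) b) j = - lam (pc (br a b)) j)
  /\ (forall a b j, pc (br a (D2 b)) j = D3 (pc (br a b) j) + lam (pc (br a b)) j).

(* [[a_λ b]_{λ+μ} c], coefficient of λ^i μ^j: with [a_λ b] = Σ_k λ^k d_k,   *)
(* it is Σ_k λ^k [d_k _{λ+μ} c].                                          *)
Definition jac_mid (L1 L2 L3 L4 : zmodType) (br12 : L1 -> L2 -> seq L3)
    (br34 : L3 -> L4 -> seq L4) (a : L1) (b : L2) (c : L4) (i j : nat) : L4 :=
  \sum_(k < i.+1) sub2 (br34 (pc (br12 a b) k) c) (i - k) j.

Definition is_LieConformal (D : L -> L) (br : L -> L -> seq L) : Prop :=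
  [/\ linear D,
      lbilinear br,
      sesquilinear D D D br,
      (forall a b j, pc (br a b) j = - negsub D (br b a) j) &
      (forall a b c i j,
         pc (br a (pc (br b c) j)) i
         = jac_mid br br a b c i j + pc (br b (pc (br a c) i)) j)].

Definition is_Nijenhuis (D : L -> L) (br : L -> L -> seq L) (N : L -> L) : Prop :=
  [/\ linear N, (forall x, N (D x) = D (N x)) &
      forall p q j, pc (br (N p) (N q)) j
        = N (pc (br (N p) q) j + pc (br p (N q)) j - N (pc (br p q) j))].

Definition is_NijenhuisLCA (D : L -> L) (br : L -> L -> seq L) (N : L -> L) : Prop :=
  is_LieConformal D br /\ is_Nijenhuis D br N.

End LCA.

Section TwoTerm.
Variables (K : pzRingType) (L0 L1 : lmodType K).

Record strict2NLinfty (D0 : L0 -> L0) (D1 : L1 -> L1) (t : L1 -> L0)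
    (b00 : L0 -> L0 -> seq L0) (b01 : L0 -> L1 -> seq L1) (b10 : L1 -> L0 -> seq L1)
    (N0 : L0 -> L0) (N1 : L1 -> L1) : Prop := {
  s2_D0 : linear D0;
  s2_D1 : linear D1;
  s2_t_lin : linear t;
  s2_t_D : forall m, t (D1 m) = D0 (t m);
  s2_b00_bil : lbilinear b00;
  s2_b01_bil : lbilinear b01;
  s2_b10_bil : lbilinear b10;
  s2_b00_ses : sesquilinear D0 D0 D0 b00;
  s2_b01_ses : sesquilinear D0 D1 D1 b01;
  s2_b10_ses : sesquilinear D1 D0 D1 b10;
  s2_N0_lin : linear N0;
  s2_N1_lin : linear N1;
  s2_N0_D : forall p, N0 (D0 p) = D0 (N0 p);
  s2_N1_D : forall m, N1 (D1 m) = D1 (N1 m);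
  s2_skew01 : forall p m j, pc (b01 p m) j = - negsub D1 (b10 m p) j;
  s2_skew00 : forall p q j, pc (b00 p q) j = - negsub D0 (b00 q p) j;
  s2_t_br : forall p m j, t (pc (b01 p m) j) = pc (b00 p (t m)) j;
  s2_t_sym : forall m n j, pc (b01 (t m) n) j = pc (b10 m (t n)) j;
  s2_jac000 : forall p q r i j,
    pc (b00 p (pc (b00 q r) j)) i - jac_mid b00 b00 p q r i j
      - pc (b00 q (pc (b00 p r) i)) j = 0;
  s2_jac001 : forall p q m i j,
    pc (b01 p (pc (b01 q m) j)) i - jac_mid b00 b01 p q m i j
      - pc (b01 q (pc (b01 p m) i)) j = 0;
  s2_tN : forall m, t (N1 m) = N0 (t m);
  s2_N0 : forall p q j,
    N0 (pc (b00 (N0 p) q) j + pc (b00 p (N0 q)) j - N0 (pc (b00 p q) j))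
      = pc (b00 (N0 p) (N0 q)) j;
  s2_N1 : forall p m j,
    N1 (pc (b01 (N0 p) m) j + pc (b01 p (N1 m)) j - N1 (pc (b01 p m) j))
      = pc (b01 (N0 p) (N1 m)) j
}.

Definition sumD (D0 : L0 -> L0) (D1 : L1 -> L1) (x : L0 * L1) : L0 * L1 :=
  (D0 x.1, D1 x.2).

Definition sumN (N0 : L0 -> L0) (N1 : L1 -> L1) (x : L0 * L1) : L0 * L1 :=
  (N0 x.1, N1 x.2).

(* [(p,m)_λ(q,n)] = (⟦p_λ q⟧, ⟦p_λ n⟧ - ⟦q_{-∂-λ} m⟧ + ⟦t(m)_λ n⟧).
   Returned as a coefficient list; its length bounds the degree of every
   term (negsub D s has degree < size s). *)
Definition sum_bracket (D1 : L1 -> L1) (t : L1 -> L0)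
    (b00 : L0 -> L0 -> seq L0) (b01 : L0 -> L1 -> seq L1)
    (x y : L0 * L1) : seq (L0 * L1) :=
  let: (p, m) := x in let: (q, n) := y in
  mkseq (fun j => (pc (b00 p q) j,
                   pc (b01 p n) j - negsub D1 (b01 q m) j + pc (b01 (t m) n) j))
        (size (b00 p q) + size (b01 p n) + size (b01 q m) + size (b01 (t m) n)).

End TwoTerm.

(* Main.v *)
Require Import Defs.
From mathcomp Require Import all_boot all_algebra.
From mathcomp Require Import complex Rstruct.
From Stdlib Require Import FunctionalExtensionality.
From mathcomp Require Import zify.
Set Implicit Arguments. Unset Strict Implicit. Unset Printing Implicit Defensive.
Import GRing.Theory.
Local Open Scope ring_scope.



Section LinHelp.
Variables (K : pzRingType) (U V : lmodType K) (f : U -> V) (Hf : linear f).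
Lemma lfB x y : f (x - y) = f x - f y.
Proof. exact: (zmod_morphism_linear Hf). Qed.
Lemma lf0 : f 0 = 0.
Proof. by rewrite -(subrr 0) lfB subrr. Qed.
Lemma lfN x : f (- x) = - f x.
Proof. by rewrite -sub0r lfB lf0 sub0r. Qed.
Lemma lfD x y : f (x + y) = f x + f y.
Proof. have := lfB x (- y); rewrite opprK => ->; by rewrite lfN opprK. Qed.
Lemma lfZ a x : f (a *: x) = a *: f x.
Proof. by move: (Hf a x 0); rewrite lf0 !addr0. Qed.
End LinHelp.

Lemma lin3 (M : zmodType) (x1 x2 x3 y1 y2 y3 : M) :
  (x1 + y1) - (x2 + y2) - (x3 + y3) = (x1 - x2 - x3) + (y1 - y2 - y3).
Proof. by rewrite !opprD (addrACA x1) (addrACA (x1 - x2)). Qed.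

Section NS.
Variables (K : pzRingType) (L : lmodType K) (D : L -> L) (HD : linear D).

Definition dl (c : L) : nat -> L := fun j => if j == 0%N then c else 0.

Fixpoint nsr (n : nat) (f : nat -> L) : nat -> L :=
  match n with
  | 0 => fun _ => 0
  | n'.+1 => fun j => dl (f 0%N) j - D (nsr n' (fun k => f k.+1) j)
                       - lam (nsr n' (fun k => f k.+1)) j
  end.

Lemma nsr_S n f : nsr n.+1 f = fun j => dl (f 0%N) j - D (nsr n (fun k => f k.+1) j)
                       - lam (nsr n (fun k => f k.+1)) j.
Proof. by []. Qed.

Lemma negsub_nsr s : negsub D s = nsr (size s) (pc s).
Proof.
elim: s => [//|c s IH] /=; apply: functional_extensionality => j.
by rewrite IH.
Qed.

Lemma nsr_ext n f g : (forall k, (k < n)%N -> f k = g k) -> nsr n f = nsr n g.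
Proof.
elim: n f g => [//|n IH] f g H /=.
rewrite (IH (fun k => f k.+1) (fun k => g k.+1)); last by move=> k Hk; apply: H.
by rewrite H.
Qed.

Lemma lam_lin (a : K) (f g : nat -> L) : lam (fun j => a *: f j + g j) = fun j => a *: lam f j + lam g j.
Proof. by apply: functional_extensionality => -[|j] /=; rewrite ?scaler0 ?addr0. Qed.

Lemma dl_lin (a : K) c c' : dl (a *: c + c') = fun j => a *: dl c j + dl c' j.
Proof. by apply: functional_extensionality => -[|j] /=; rewrite ?scaler0 ?addr0. Qed.

Lemma nsr_lin n (a : K) (f g : nat -> L) :
  nsr n (fun j => a *: f j + g j) = fun j => a *: nsr n f j + nsr n g j.
Proof.
elim: n f g => [|n IH] f g /=; apply: functional_extensionality => j.
  by rewrite scaler0 addr0.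
rewrite (IH (fun k => f k.+1) (fun k => g k.+1)) lam_lin dl_lin.
by rewrite (lfD HD) (lfZ HD) lin3 !scalerBr.
Qed.


Lemma lam0 : lam (fun _ : nat => (0 : L)) = fun _ => 0.
Proof. by apply: functional_extensionality => -[|j]. Qed.

Lemma nsr0 n : nsr n (fun _ => 0) = fun _ => 0.
Proof.
elim: n => [//|n IH] /=; apply: functional_extensionality => j.
by rewrite IH lam0 (lf0 HD) /dl; case: (j == 0%N); rewrite !subr0.
Qed.

Lemma nsr_add n (f g : nat -> L) :
  nsr n (fun j => f j + g j) = fun j => nsr n f j + nsr n g j.
Proof.
have := nsr_lin n 1 f g.
have -> : (fun j => 1 *: f j + g j) = (fun j => f j + g j).
  by apply: functional_extensionality => j; rewrite scale1r.
by move=> ->; apply: functional_extensionality => j; rewrite scale1r.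
Qed.

Lemma nsr_scale n (a : K) (f : nat -> L) :
  nsr n (fun j => a *: f j) = fun j => a *: nsr n f j.
Proof.
have := nsr_lin n a f (fun _ => 0).
have -> : (fun j => a *: f j + 0) = (fun j => a *: f j).
  by apply: functional_extensionality => j; rewrite addr0.
by move=> ->; rewrite nsr0; apply: functional_extensionality => j; rewrite addr0.
Qed.

Lemma nsr_opp n (f : nat -> L) :
  nsr n (fun j => - f j) = fun j => - nsr n f j.
Proof.
have := nsr_scale n (-1) f.
have -> : (fun j => (-1) *: f j) = (fun j => - f j).
  by apply: functional_extensionality => j; rewrite scaleN1r.
by move=> ->; apply: functional_extensionality => j; rewrite scaleN1r.
Qed.

Lemma nsr_sub n (f g : nat -> L) :
  nsr n (fun j => f j - g j) = fun j => nsr n f j - nsr n g j.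
Proof. by rewrite nsr_add nsr_opp. Qed.

Lemma nsr_supp n f j : (n <= j)%N -> nsr n f j = 0.
Proof.
elim: n f j => [//|n IH] f j Hj /=.
rewrite /dl; case: j Hj => [//|j] Hj /=.
by rewrite !IH ?(lf0 HD) ?subrr // ltnW.
Qed.

Lemma nsr_zext n f : (forall k, (n <= k)%N -> f k = 0) -> nsr n.+1 f = nsr n f.
Proof.
elim: n f => [|n IH] f H; apply: functional_extensionality => j.
  by rewrite /= H // lam0 (lf0 HD) /dl; case: (j == 0%N); rewrite !subr0.
by rewrite nsr_S [in RHS]nsr_S IH // => k Hk; apply: H.
Qed.

Lemma nsr_ge n m f : (n <= m)%N -> (forall k, (n <= k)%N -> f k = 0) -> nsr m f = nsr n f.
Proof.
move=> Hnm H; elim: m Hnm => [|m IH] Hnm; first by rewrite leqn0 in Hnm; move/eqP: Hnm => ->.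
rewrite leq_eqVlt in Hnm; case/orP: Hnm => [/eqP -> //|Hnm].
rewrite ltnS in Hnm; rewrite nsr_zext ?IH // => k Hk; apply: H; exact: leq_trans Hnm Hk.
Qed.

Lemma lamD (f : nat -> L) : lam (fun j => D (f j)) = fun j => D (lam f j).
Proof. by apply: functional_extensionality => -[|j] /=; rewrite ?(lf0 HD). Qed.

Lemma nsr_D n f : nsr n (fun j => D (f j)) = fun j => D (nsr n f j).
Proof.
elim: n f => [|n IH] f /=; apply: functional_extensionality => j.
  by rewrite (lf0 HD).
rewrite (IH (fun k => f k.+1)) lamD !(lfB HD) /dl.
by case: (j == 0%N); rewrite ?(lf0 HD).
Qed.

Definition X1 (f : nat -> L) : nat -> L := fun j => - D (f j) - lam f j.

Lemma nsr_lam n f : nsr n.+1 (lam f) = X1 (nsr n f).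
Proof.
apply: functional_extensionality => j /=; rewrite /dl /X1.
by case: (j == 0%N); rewrite sub0r.
Qed.

Lemma nsr_dl n c : nsr n.+1 (dl c) = dl c.
Proof.
apply: functional_extensionality => j /=.
have -> : (fun k => dl c k.+1) = fun _ => 0 by [].
by rewrite nsr0 lam0 (lf0 HD) !subr0.
Qed.

Lemma fun_decomp (f : nat -> L) : f = fun j => dl (f 0%N) j + lam (fun k => f k.+1) j.
Proof. by apply: functional_extensionality => -[|j] /=; rewrite ?addr0 ?add0r. Qed.

Lemma nsr_invol n m f : (n <= m)%N -> (forall k, (n <= k)%N -> f k = 0) ->
  nsr m (nsr n f) = f.
Proof.
elim: n m f => [|n IH] m f Hnm H.
  by rewrite nsr0; apply: functional_extensionality => j; rewrite H.
case: m Hnm => [//|m] Hnm.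
set r := nsr n (fun k => f k.+1).
have -> : nsr n.+1 f = fun j => dl (f 0%N) j + X1 r j.
  by apply: functional_extensionality => j /=; rewrite /X1 addrA.
rewrite nsr_add nsr_dl /X1 nsr_sub nsr_opp nsr_D nsr_lam.
have Hr : forall k, (n <= k)%N -> r k = 0 by move=> k Hk; rewrite /r nsr_supp.
rewrite ltnS in Hnm; rewrite (@nsr_zext m r); last by move=> k Hk; apply: Hr; exact: leq_trans Hnm Hk.
have -> : nsr m r = fun k => f k.+1 by apply: IH => // k Hk; apply: H.
rewrite [RHS]fun_decomp; apply: functional_extensionality => j; rewrite /X1.
by congr (_ + _); rewrite opprB opprK addrCA addNr addr0.
Qed.

End NS.

Section NSComm.
Variables (K : pzRingType) (L L' : lmodType K) (D : L -> L) (D' : L' -> L').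
Variables (T : L -> L') (HT : linear T) (HD : linear D) (HD' : linear D').
Hypothesis TD : forall x, T (D x) = D' (T x).

Lemma lam_comm (f : nat -> L) j : T (lam f j) = lam (fun k => T (f k)) j.
Proof. by case: j => [|j] /=; rewrite ?(lf0 HT). Qed.

Lemma nsr_commf n f : (fun j => T (nsr D n f j)) = nsr D' n (fun k => T (f k)).
Proof.
elim: n f => [|n IH] f; apply: functional_extensionality => j /=; first by rewrite (lf0 HT).
rewrite !(lfB HT) TD lam_comm -(IH (fun k => f k.+1)) /dl.
by case: (j == 0%N); rewrite ?(lf0 HT).
Qed.

Lemma nsr_comm n f j : T (nsr D n f j) = nsr D' n (fun k => T (f k)) j.
Proof. by rewrite -nsr_commf. Qed.
End NSComm.



Lemma lin4 (M : zmodType) (x1 x2 x3 x4 y1 y2 y3 y4 : M) :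
  (x1 + y1) - (x2 + y2) - (x3 + y3) - (x4 + y4) = (x1 - x2 - x3 - x4) + (y1 - y2 - y3 - y4).
Proof. by rewrite (lin3 x1 x2 x3) opprD (addrACA (x1 - x2 - x3)). Qed.

Section TwoVar.
Variables (K : pzRingType) (M : lmodType K) (D : M -> M) (HD : linear D).

Definition LL (g : nat -> nat -> M) : nat -> nat -> M :=
  fun i j => if i is i'.+1 then g i' j else 0.
Definition MM (g : nat -> nat -> M) : nat -> nat -> M :=
  fun i j => if j is j'.+1 then g i j' else 0.
Definition EE (f : nat -> M) : nat -> nat -> M := fun i j => if i == 0%N then f j else 0.
Definition Sf (f : nat -> M) : nat -> nat -> M := fun i j => f (i + j)%N *+ 'C(i + j, i).

Fixpoint psiN (n : nat) (g : nat -> nat -> M) : nat -> nat -> M :=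
  match n with
  | 0 => fun _ _ => 0
  | n'.+1 => fun i j => (if j == 0%N then g i 0%N else 0)
       - D (psiN n' (fun i j => g i j.+1) i j)
       - LL (psiN n' (fun i j => g i j.+1)) i j
       - MM (psiN n' (fun i j => g i j.+1)) i j
  end.

Lemma psiN_S n g : psiN n.+1 g = fun i j => (if j == 0%N then g i 0%N else 0)
       - D (psiN n (fun i j => g i j.+1) i j)
       - LL (psiN n (fun i j => g i j.+1)) i j
       - MM (psiN n (fun i j => g i j.+1)) i j.
Proof. by []. Qed.

Definition hornerL (H : M -> nat -> nat -> M) (s : seq M) : nat -> nat -> M :=
  foldr (fun u r i j => H u i j + LL r i j) (fun _ _ => 0) s.
Definition hornM (H : M -> nat -> nat -> M) (s : seq M) : nat -> nat -> M :=
  foldr (fun u r i j => H u i j + MM r i j) (fun _ _ => 0) s.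

Ltac fext := apply: functional_extensionality => ?; apply: functional_extensionality => ?.

Lemma LL0 : LL (fun _ _ => 0) = fun _ _ => 0.
Proof. by apply: functional_extensionality => -[|i]; apply: functional_extensionality. Qed.
Lemma MM0 : MM (fun _ _ => 0) = fun _ _ => 0.
Proof. by apply: functional_extensionality => i; apply: functional_extensionality => -[|j]. Qed.

Lemma LL_add (g h : nat -> nat -> M) : LL (fun i j => g i j + h i j) = fun i j => LL g i j + LL h i j.
Proof. by apply: functional_extensionality => -[|i]; apply: functional_extensionality => j /=; rewrite ?addr0. Qed.
Lemma MM_add (g h : nat -> nat -> M) : MM (fun i j => g i j + h i j) = fun i j => MM g i j + MM h i j.
Proof. by apply: functional_extensionality => i; apply: functional_extensionality => -[|j] /=; rewrite ?addr0. Qed.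
Lemma LL_opp (g : nat -> nat -> M) : LL (fun i j => - g i j) = fun i j => - LL g i j.
Proof. by apply: functional_extensionality => -[|i]; apply: functional_extensionality => j /=; rewrite ?oppr0. Qed.
Lemma MM_opp (g : nat -> nat -> M) : MM (fun i j => - g i j) = fun i j => - MM g i j.
Proof. by apply: functional_extensionality => i; apply: functional_extensionality => -[|j] /=; rewrite ?oppr0. Qed.
Lemma LL_D (g : nat -> nat -> M) : LL (fun i j => D (g i j)) = fun i j => D (LL g i j).
Proof. by apply: functional_extensionality => -[|i]; apply: functional_extensionality => j /=; rewrite ?(lf0 HD). Qed.
Lemma MM_D (g : nat -> nat -> M) : MM (fun i j => D (g i j)) = fun i j => D (MM g i j).
Proof. by apply: functional_extensionality => i; apply: functional_extensionality => -[|j] /=; rewrite ?(lf0 HD). Qed.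
Lemma LLMM (g : nat -> nat -> M) : LL (MM g) = MM (LL g).
Proof. by apply: functional_extensionality => -[|i]; apply: functional_extensionality => -[|j]. Qed.

Lemma psiN0 n : psiN n (fun _ _ => 0) = fun _ _ => 0.
Proof.
elim: n => [//|n IH]; rewrite psiN_S IH LL0 MM0; fext.
by rewrite (lf0 HD) !subr0; case: ifP.
Qed.

Lemma psiN_add n g h : psiN n (fun i j => g i j + h i j) = fun i j => psiN n g i j + psiN n h i j.
Proof.
elim: n g h => [|n IH] g h; first by fext; rewrite addr0.
rewrite !psiN_S (IH (fun i j => g i j.+1) (fun i j => h i j.+1)) LL_add MM_add.
apply: functional_extensionality => i; apply: functional_extensionality => j.
rewrite (lfD HD).
have -> : (if j == 0%N then g i 0%N + h i 0%N else 0) = (if j == 0%N then g i 0%N else 0) + (if j == 0%N then h i 0%N else 0) by case: ifP; rewrite ?addr0.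
by rewrite lin4.
Qed.

Lemma psiN_opp n g : psiN n (fun i j => - g i j) = fun i j => - psiN n g i j.
Proof.
elim: n g => [|n IH] g; first by fext; rewrite oppr0.
rewrite !psiN_S (IH (fun i j => g i j.+1)) LL_opp MM_opp.
apply: functional_extensionality => i; apply: functional_extensionality => j.
rewrite (lfN HD) !opprD !opprK; by case: ifP; rewrite ?oppr0.
Qed.

Lemma psiN_sub n g h : psiN n (fun i j => g i j - h i j) = fun i j => psiN n g i j - psiN n h i j.
Proof. by rewrite psiN_add psiN_opp. Qed.

Lemma psiN_LL n g : psiN n (LL g) = LL (psiN n g).
Proof.
elim: n g => [|n IH] g; first by rewrite LL0.
rewrite !psiN_S.
have -> : (fun i j => LL g i j.+1) = LL (fun i j => g i j.+1).
  by apply: functional_extensionality => -[|i].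
rewrite IH.
apply: functional_extensionality => -[|i]; apply: functional_extensionality => -[|j] //=;
  by rewrite (lf0 HD) !subr0.
Qed.

Lemma psiN_MM n g : psiN n.+1 (MM g) = fun i j =>
   - D (psiN n g i j) - LL (psiN n g) i j - MM (psiN n g) i j.
Proof.
rewrite psiN_S; apply: functional_extensionality => i; apply: functional_extensionality => j.
by case: ifP; rewrite ?sub0r.
Qed.

Lemma psiN_zext n g : (forall i j, (n <= j)%N -> g i j = 0) -> psiN n.+1 g = psiN n g.
Proof.
elim: n g => [|n IH] g H.
  rewrite psiN_S /= LL0 MM0; apply: functional_extensionality => i; apply: functional_extensionality => j.
  by rewrite (lf0 HD) H // !subr0; case: ifP.
by rewrite psiN_S [in RHS]psiN_S IH // => i j Hj; apply: H.
Qed.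

Lemma psiN_ge n m g : (n <= m)%N -> (forall i j, (n <= j)%N -> g i j = 0) ->
  psiN m g = psiN n g.
Proof.
move=> Hnm H; elim: m Hnm => [|m IH] Hnm; first by rewrite leqn0 in Hnm; move/eqP: Hnm => ->.
rewrite leq_eqVlt in Hnm; case/orP: Hnm => [/eqP -> //|Hnm].
rewrite ltnS in Hnm; rewrite psiN_zext ?IH // => i j Hj; apply: H; exact: leq_trans Hnm Hj.
Qed.

Lemma psiN_const n g : (forall i j, (0 < j)%N -> g i j = 0) -> psiN n.+1 g = g.
Proof.
move=> H; rewrite psiN_S.
have -> : (fun i j => g i j.+1) = fun _ _ => 0.
  by apply: functional_extensionality => i; apply: functional_extensionality => j; rewrite H.
rewrite psiN0 LL0 MM0; apply: functional_extensionality => i; apply: functional_extensionality => j.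
rewrite (lf0 HD) !subr0; case: j => [|j] //=; by rewrite H.
Qed.

Lemma psiN_hornerL n H s : psiN n (hornerL H s) = hornerL (fun u => psiN n (H u)) s.
Proof.
elim: s => [|u s IH] /=; first by rewrite psiN0.
by rewrite psiN_add psiN_LL IH.
Qed.

Lemma hornerL_ext H1 H2 s : (forall u, u \in s -> H1 u = H2 u) -> hornerL H1 s = hornerL H2 s.
Proof.
elim: s => [//|u s IH] Hs /=; rewrite Hs ?mem_head // IH // => v Hv.
by apply: Hs; rewrite in_cons Hv orbT.
Qed.

Lemma hornerL_EE (F : M -> nat -> M) s : F 0 = (fun _ => 0) ->
  hornerL (fun u => EE (F u)) s = fun i j => F (pc s i) j.
Proof.
move=> F0; elim: s => [|u s IH] /=.
  by apply: functional_extensionality => i; apply: functional_extensionality => j; rewrite /pc nth_nil F0.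
rewrite IH; apply: functional_extensionality => -[|i]; apply: functional_extensionality => j /=.
  by rewrite addr0.
by rewrite add0r.
Qed.

Lemma sum_hornerL (G : M -> nat -> nat -> M) s : G 0 = (fun _ _ => 0) ->
  (fun i j => \sum_(k < i.+1) G (pc s k) (i - k)%N j) = hornerL G s.
Proof.
move=> G0; elim: s => [|u s IH] /=.
  apply: functional_extensionality => i; apply: functional_extensionality => j.
  by rewrite big1 // => k _; rewrite /pc nth_nil G0.
rewrite -IH; apply: functional_extensionality => -[|i]; apply: functional_extensionality => j /=.
  by rewrite big_ord_recl big_ord0 addr0.
by rewrite big_ord_recl /=.
Qed.

Lemma Sf_add f g : Sf (fun k => f k + g k) = fun i j => Sf f i j + Sf g i j.
Proof. by apply: functional_extensionality => i; apply: functional_extensionality => j; rewrite /Sf mulrnDl. Qed.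
Lemma Sf_opp f : Sf (fun k => - f k) = fun i j => - Sf f i j.
Proof. by apply: functional_extensionality => i; apply: functional_extensionality => j; rewrite /Sf mulNrn. Qed.
Lemma Sf_sub f g : Sf (fun k => f k - g k) = fun i j => Sf f i j - Sf g i j.
Proof. by rewrite Sf_add Sf_opp. Qed.

Lemma DMn x n : D (x *+ n) = D x *+ n.
Proof. elim: n => [|n IH]; by rewrite ?mulr0n ?(lf0 HD) // !mulrS (lfD HD) IH. Qed.

Lemma Sf_D f : Sf (fun k => D (f k)) = fun i j => D (Sf f i j).
Proof. by apply: functional_extensionality => i; apply: functional_extensionality => j; rewrite /Sf DMn. Qed.

Lemma Sf_lam f : Sf (lam f) = fun i j => LL (Sf f) i j + MM (Sf f) i j.
Proof.
apply: functional_extensionality => -[|i]; apply: functional_extensionality => -[|j];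
  rewrite /Sf /LL /MM /=.
- by rewrite mul0rn addr0.
- by rewrite add0r !bin0.
- by rewrite addr0 !addn0 !binn.
- rewrite addSn binS mulrnDr addrC addSnnS; congr (_ + _).
Qed.

Lemma Sf_dl c : Sf (dl c) = fun i j => if j == 0%N then EE (dl c) i 0%N else 0.
Proof.
apply: functional_extensionality => -[|i]; apply: functional_extensionality => -[|j] //=;
  by rewrite /Sf /dl /EE /= ?mul0rn.
Qed.

Lemma Sf_nsr n z : Sf (nsr D n z) = psiN n (EE z).
Proof.
elim: n z => [|n IH] z.
  by apply: functional_extensionality => i; apply: functional_extensionality => j; rewrite /Sf mul0rn.
rewrite nsr_S psiN_S.
have -> : (fun i j => EE z i j.+1) = EE (fun k => z k.+1) by [].
rewrite -IH Sf_sub Sf_sub Sf_D Sf_lam.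
apply: functional_extensionality => i; apply: functional_extensionality => j.
rewrite opprD addrA; congr (_ - _ - _ - _).
rewrite /Sf /dl /EE; case: i => [|i]; case: j => [|j] //=; by rewrite mul0rn.
Qed.

Lemma EE_add f g : EE (fun k => f k + g k) = fun i j => EE f i j + EE g i j.
Proof. by apply: functional_extensionality => i; apply: functional_extensionality => j; rewrite /EE; case: ifP; rewrite ?addr0. Qed.
Lemma EE_opp f : EE (fun k => - f k) = fun i j => - EE f i j.
Proof. by apply: functional_extensionality => i; apply: functional_extensionality => j; rewrite /EE; case: ifP; rewrite ?oppr0. Qed.
Lemma EE_sub f g : EE (fun k => f k - g k) = fun i j => EE f i j - EE g i j.
Proof. by rewrite EE_add EE_opp. Qed.
Lemma EE_D f : EE (fun k => D (f k)) = fun i j => D (EE f i j).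
Proof. by apply: functional_extensionality => i; apply: functional_extensionality => j; rewrite /EE; case: ifP; rewrite ?(lf0 HD). Qed.
Lemma EE_lam f : EE (lam f) = MM (EE f).
Proof. by apply: functional_extensionality => i; apply: functional_extensionality => -[|j]; rewrite /EE /=; case: ifP. Qed.

Lemma gl1 (P A B : M) : P + (- A - P - B) = - A - B.
Proof. by rewrite addrA (addrC P) subrK. Qed.

Lemma EE_nsr n y : (forall k, (n <= k)%N -> y k = 0) -> EE (nsr D n y) = psiN n (Sf y).
Proof.
elim: n y => [|n IH] y Hy.
  by apply: functional_extensionality => i; apply: functional_extensionality => j; rewrite /EE; case: ifP.
have Hy' : forall k, (n <= k)%N -> y k.+1 = 0 by move=> k Hk; apply: Hy.
rewrite nsr_S EE_sub EE_sub EE_D EE_lam (IH _ Hy').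
rewrite [in RHS](fun_decomp y) Sf_add Sf_lam psiN_add psiN_add psiN_LL psiN_MM.
rewrite (@psiN_zext n (Sf (fun k => y k.+1))); last first.
  by move=> i j Hj; rewrite /Sf Hy' ?mul0rn // (leq_trans Hj) // leq_addl.
rewrite psiN_const; last by move=> i j Hj; rewrite /Sf /dl; case: j Hj => [//|j] _; rewrite addnS /= mul0rn.
apply: functional_extensionality => i; apply: functional_extensionality => j.
rewrite /EE /dl /Sf; case: i => [|i] /=; last first.
  by rewrite mul0rn !add0r gl1.
by rewrite add0n bin0 mulr1n add0r subr0 addrA.
Qed.

End TwoVar.



Section Br.
Variables (K : pzRingType) (M : lmodType K) (D : M -> M) (HD : linear D).
Variable br : M -> M -> seq M.
Local Notation hL := (@hornerL K M).
Local Notation EE := (@EE K M).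
Local Notation Sf := (@Sf K M).
Hypothesis badd1 : forall a a' b j, pc (br (a + a') b) j = pc (br a b) j + pc (br a' b) j.
Hypothesis badd2 : forall a b b' j, pc (br a (b + b')) j = pc (br a b) j + pc (br a b') j.
Hypothesis bses1 : forall a b j, pc (br (D a) b) j = - lam (pc (br a b)) j.
Hypothesis bses2 : forall a b j, pc (br a (D b)) j = D (pc (br a b) j) + lam (pc (br a b)) j.
Hypothesis bskew : forall a b j, pc (br a b) j = - negsub D (br b a) j.

Lemma br0l b j : pc (br 0 b) j = 0.
Proof. by have := badd1 0 0 b j; rewrite addr0 -{1}[pc (br 0 b) j]addr0 => /addrI <-. Qed.
Lemma br0r a j : pc (br a 0) j = 0.
Proof. by have := badd2 a 0 0 j; rewrite addr0 -{1}[pc (br a 0) j]addr0 => /addrI <-. Qed.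
Lemma bNl a b j : pc (br (- a) b) j = - pc (br a b) j.
Proof. by apply/eqP; rewrite -addr_eq0 -badd1 addNr br0l. Qed.
Lemma bNr a b j : pc (br a (- b)) j = - pc (br a b) j.
Proof. by apply/eqP; rewrite -addr_eq0 -badd2 addNr br0r. Qed.
Lemma bBl a a' b j : pc (br (a - a') b) j = pc (br a b) j - pc (br a' b) j.
Proof. by rewrite badd1 bNl. Qed.
Lemma bBr a b b' j : pc (br a (b - b')) j = pc (br a b) j - pc (br a b') j.
Proof. by rewrite badd2 bNr. Qed.

Definition Jac a b c i j :=
  pc (br a (pc (br b c) j)) i - jac_mid br br a b c i j - pc (br b (pc (br a c) i)) j.

Lemma br_nsr a N f :
  (fun i j => pc (br a (nsr D N f j)) i) = psiN D N (fun i j => pc (br a (f j)) i).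
Proof.
elim: N f => [|N IH] f.
  by apply: functional_extensionality => i; apply: functional_extensionality => j; rewrite br0r.
rewrite nsr_S psiN_S -(IH (fun k => f k.+1)).
apply: functional_extensionality => i; apply: functional_extensionality => j.
rewrite !bBr bses2 opprD addrA; congr (_ - _ - _ - _).
- by rewrite /dl; case: ifP; rewrite ?br0r.
- by case: j => [|j] /=; rewrite ?br0r.
Qed.


Lemma pc_ge (s : seq M) k : (size s <= k)%N -> pc s k = 0.
Proof. by move=> H; rewrite /pc nth_default. Qed.

Lemma size_le_sum (F : M -> nat) (s : seq M) u : u \in s -> (F u <= \sum_(v <- s) F v)%N.
Proof.
elim: s => [//|v s IH]; rewrite in_cons big_cons => /orP [/eqP -> | Hu].
  exact: leq_addr.
exact: leq_trans (IH Hu) (leq_addl _ _).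
Qed.

Lemma hornerL_opp H s : hL (fun u i j => - H u i j) s = fun i j => - hL H s i j.
Proof.
elim: s => [|u s IH] /=.
  by apply: functional_extensionality => i; apply: functional_extensionality => j; rewrite oppr0.
by rewrite IH LL_opp; apply: functional_extensionality => i; apply: functional_extensionality => j; rewrite opprD.
Qed.

Lemma hornerL_supp H s n : (forall u, u \in s -> forall i j, (n <= j)%N -> H u i j = 0) ->
  forall i j, (n <= j)%N -> hL H s i j = 0.
Proof.
elim: s => [//|u s IH] Hs i j Hj /=.
rewrite Hs ?mem_head // add0r; case: i => [//|i] /=.
by rewrite IH // => v Hv; apply: Hs; rewrite in_cons Hv orbT.
Qed.


Lemma mid_hornerL a b c :
  (fun i j => jac_mid br br a b c i j) = hL (fun u i j => sub2 (br u c) i j) (br a b).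
Proof.
rewrite /jac_mid -sum_hornerL //.
by apply: functional_extensionality => i; apply: functional_extensionality => j; rewrite /sub2 br0l mul0rn.
Qed.

Section S2.
Variables a b c : M.

Let t1' := fun i j => pc (br a (pc (br c b) j)) i.
Let t3' := fun i j => pc (br c (pc (br a b) i)) j.
Let mid' := fun i j => jac_mid br br a c b i j.
Let N1 := size (br c b).
Let Nm := (\sum_(u <- br a b) size (br c u))%N.
Let N3 := (\sum_(u <- br a c) size (br u b))%N.

Lemma L_t1 : (fun i j => pc (br a (pc (br b c) j)) i) = fun i j => - psiN D N1 t1' i j.
Proof.
have -> : (fun i j => pc (br a (pc (br b c) j)) i) =
          fun i j => - pc (br a (nsr D N1 (pc (br c b)) j)) i.
  apply: functional_extensionality => i; apply: functional_extensionality => j.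
  by rewrite (bskew b c j) bNr negsub_nsr.
have := br_nsr a N1 (pc (br c b)) => H.
apply: functional_extensionality => i; apply: functional_extensionality => j.
by have := f_equal (fun F => F i j) H => /= ->.
Qed.

Lemma L_mid : (fun i j => jac_mid br br a b c i j) = fun i j => - psiN D Nm t3' i j.
Proof.
rewrite mid_hornerL.
have -> : t3' = hL (fun u => EE (pc (br c u))) (br a b).
  rewrite hornerL_EE; last by apply: functional_extensionality => k; rewrite br0r.
  by [].
rewrite (psiN_hornerL HD) -(hornerL_opp (fun u => psiN D Nm (EE (pc (br c u))))); apply: hornerL_ext => u Hu.
rewrite (@psiN_ge _ _ D HD (size (br c u))); last 2 first.
- exact: (size_le_sum (fun v => size (br c v))).
- by move=> i j Hj; rewrite /EE pc_ge //; case: ifP.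
rewrite -(Sf_nsr HD).
apply: functional_extensionality => i; apply: functional_extensionality => j.
by rewrite /Sf /sub2 bskew negsub_nsr mulNrn.
Qed.

Lemma L_t3 : (fun i j => pc (br b (pc (br a c) i)) j) = fun i j => - psiN D N3 mid' i j.
Proof.
have -> : mid' = hL (fun u => Sf (pc (br u b))) (br a c) by rewrite /mid' mid_hornerL.
have -> : (fun i j => pc (br b (pc (br a c) i)) j) = hL (fun u => EE (pc (br b u))) (br a c).
  rewrite hornerL_EE //; by apply: functional_extensionality => k; rewrite br0r.
rewrite (psiN_hornerL HD) -(hornerL_opp (fun u => psiN D N3 (Sf (pc (br u b))))); apply: hornerL_ext => u Hu.
rewrite (@psiN_ge _ _ D HD (size (br u b))); last 2 first.
- exact: (size_le_sum (fun v => size (br v b))).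
- by move=> i j Hj; rewrite /Sf pc_ge ?mul0rn // (leq_trans Hj) // leq_addl.
rewrite -(EE_nsr HD); last by move=> k Hk; rewrite pc_ge.
apply: functional_extensionality => i; apply: functional_extensionality => j.
by rewrite /EE bskew negsub_nsr; case: ifP; rewrite ?oppr0.
Qed.

End S2.

Lemma S2 a b c : (forall i j, Jac a c b i j = 0) -> forall i j, Jac a b c i j = 0.
Proof.
move=> H0.
set N1 := size (br c b).
set Nm := (\sum_(u <- br a b) size (br c u))%N.
set N3 := (\sum_(u <- br a c) size (br u b))%N.
set N := (N1 + Nm + N3)%N.
have E1 := L_t1 a b c; have E2 := L_mid a b c; have E3 := L_t3 a b c.
rewrite -/N1 -/Nm -/N3 in E1 E2 E3.
set t1' := (fun i j => pc (br a (pc (br c b) j)) i) in E1.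
set t3' := (fun i j => pc (br c (pc (br a b) i)) j) in E2.
set mid' := (fun i j => jac_mid br br a c b i j) in E3.
have H1 : psiN D N t1' = psiN D N1 t1'.
  apply: psiN_ge => //; first exact: leq_trans (leq_addr Nm N1) (leq_addr _ _).
  by move=> i j Hj; rewrite /t1' (@pc_ge (br c b) j) // br0r.
have H2 : psiN D N t3' = psiN D Nm t3'.
  apply: psiN_ge => //; first exact: leq_trans (leq_addl N1 Nm) (leq_addr _ _).
  move=> i j Hj; rewrite /t3'.
  case: (ltnP i (size (br a b))) => Hi.
    rewrite pc_ge //; apply: leq_trans Hj.
    exact: (size_le_sum (fun v => size (br c v)) (mem_nth 0 Hi)).
  by rewrite (pc_ge Hi) br0r.
have H3 : psiN D N mid' = psiN D N3 mid'.
  apply: psiN_ge => //; first by rewrite /N leq_addl.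
  move=> i j Hj; rewrite /mid'.
  have := f_equal (fun F => F i j) (mid_hornerL a c b) => /= ->.
  apply: (hornerL_supp (n:=N3)) => // u Hu i' j' Hj'.
  rewrite /sub2 pc_ge ?mul0rn //; apply: leq_trans (leq_addl i' j').
  exact: leq_trans (size_le_sum (fun v => size (br v b)) Hu) Hj'.
have HJ : (fun i j => Jac a c b i j) = fun i j => t1' i j - mid' i j - t3' i j by [].
have Hz : psiN D N (fun i j => t1' i j - mid' i j - t3' i j) = fun _ _ => 0.
  rewrite -HJ.
  have -> : (fun i j => Jac a c b i j) = fun _ _ => 0.
    by apply: functional_extensionality => i; apply: functional_extensionality => j; rewrite H0.
  exact: (psiN0 HD).
move=> i j; rewrite /Jac.
have := f_equal (fun F => F i j) E1 => /= ->.
have := f_equal (fun F => F i j) E2 => /= ->.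
have := f_equal (fun F => F i j) E3 => /= ->.
rewrite -H1 -H2 -H3.
have := f_equal (fun F => F i j) Hz; rewrite !(psiN_sub HD) /= => Hz'.
by apply/eqP; rewrite -oppr_eq0 !opprD !opprK addrAC Hz'.
Qed.

Section HM.
Variable G : M -> nat -> nat -> M.
Hypothesis Gadd : forall u v, G (u + v) = fun i j => G u i j + G v i j.
Hypothesis GD : forall u, G (D u) = fun i j => - (LL (G u) i j + MM (G u) i j).

Lemma G0 : G 0 = fun _ _ => 0.
Proof.
apply: functional_extensionality => i; apply: functional_extensionality => j.
have := f_equal (fun F => F i j) (Gadd 0 0); rewrite addr0 /= => H.
by move: H; rewrite -{1}[G 0 i j]addr0 => /addrI <-.
Qed.
Lemma GN u : G (- u) = fun i j => - G u i j.
Proof.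
apply: functional_extensionality => i; apply: functional_extensionality => j.
have := f_equal (fun F => F i j) (Gadd u (- u)); rewrite subrr G0 /= => H.
by apply/eqP; rewrite -addr_eq0 addrC -H.
Qed.

Fixpoint hLf n (f : nat -> M) : nat -> nat -> M :=
  match n with 0 => fun _ _ => 0
  | n'.+1 => fun i j => G (f 0%N) i j + LL (hLf n' (fun k => f k.+1)) i j end.
Fixpoint hMf n (f : nat -> M) : nat -> nat -> M :=
  match n with 0 => fun _ _ => 0
  | n'.+1 => fun i j => G (f 0%N) i j + MM (hMf n' (fun k => f k.+1)) i j end.

Lemma hMf_S n f : hMf n.+1 f = fun i j => G (f 0%N) i j + MM (hMf n (fun k => f k.+1)) i j.
Proof. by []. Qed.

Lemma hornerL_hLf s : hL G s = hLf (size s) (pc s).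
Proof. by elim: s => [//|u s IH] /=; rewrite IH. Qed.
Lemma hornerM_hMf s : hornM G s = hMf (size s) (pc s).
Proof. by elim: s => [//|u s IH] /=; rewrite IH. Qed.

Lemma hMf0 n : hMf n (fun _ => 0) = fun _ _ => 0.
Proof.
elim: n => [//|n IH] /=; rewrite IH MM0 G0.
by apply: functional_extensionality => i; apply: functional_extensionality => j; rewrite addr0.
Qed.

Lemma hMf_add n f g : hMf n (fun k => f k + g k) = fun i j => hMf n f i j + hMf n g i j.
Proof.
elim: n f g => [|n IH] f g /=.
  by apply: functional_extensionality => i; apply: functional_extensionality => j; rewrite addr0.
rewrite IH MM_add Gadd.
by apply: functional_extensionality => i; apply: functional_extensionality => j; rewrite addrACA.
Qed.

Lemma hMf_opp n f : hMf n (fun k => - f k) = fun i j => - hMf n f i j.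
Proof.
elim: n f => [|n IH] f /=.
  by apply: functional_extensionality => i; apply: functional_extensionality => j; rewrite oppr0.
rewrite IH MM_opp GN.
by apply: functional_extensionality => i; apply: functional_extensionality => j; rewrite opprD.
Qed.

Lemma hMf_D n f : hMf n (fun k => D (f k)) = fun i j => - (LL (hMf n f) i j + MM (hMf n f) i j).
Proof.
elim: n f => [|n IH] f /=.
  by apply: functional_extensionality => -[|i]; apply: functional_extensionality => -[|j];
     rewrite /= ?addr0 oppr0.
rewrite IH GD.
apply: functional_extensionality => i; apply: functional_extensionality => j.
rewrite /LL /MM; case: i => [|i]; case: j => [|j] /=; rewrite ?add0r ?addr0 ?oppr0 //.
- by rewrite opprD.
- by rewrite -opprD addrACA.
Qed.

Lemma hMf_lam n f : hMf n.+1 (lam f) = MM (hMf n f).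
Proof.
rewrite /= G0.
by apply: functional_extensionality => i; apply: functional_extensionality => j; rewrite add0r.
Qed.

Lemma hMf_dl n c : hMf n.+1 (dl c) = G c.
Proof.
rewrite /=; have -> : (fun k => dl c k.+1) = fun _ => 0 by [].
rewrite hMf0 MM0.
by apply: functional_extensionality => i; apply: functional_extensionality => j; rewrite addr0.
Qed.

Lemma hMf_zext n f : (forall k, (n <= k)%N -> f k = 0) -> hMf n.+1 f = hMf n f.
Proof.
elim: n f => [|n IH] f H.
  rewrite /= H // G0 MM0.
  by apply: functional_extensionality => i; apply: functional_extensionality => j; rewrite addr0.
by rewrite hMf_S [in RHS]hMf_S IH // => k Hk; apply: H.
Qed.

Lemma hMf_ge n m f : (n <= m)%N -> (forall k, (n <= k)%N -> f k = 0) -> hMf m f = hMf n f.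
Proof.
move=> Hnm H; elim: m Hnm => [|m IH] Hnm; first by rewrite leqn0 in Hnm; move/eqP: Hnm => ->.
rewrite leq_eqVlt in Hnm; case/orP: Hnm => [/eqP -> //|Hnm].
rewrite ltnS in Hnm; rewrite hMf_zext ?IH // => k Hk; apply: H; exact: leq_trans Hnm Hk.
Qed.

Lemma hMf_nsr n m x : (n <= m)%N -> (forall k, (n <= k)%N -> x k = 0) ->
  hMf m (nsr D n x) = hLf n x.
Proof.
elim: n m x => [|n IH] m x Hnm Hx.
  by rewrite /= -[fun _ : nat => 0](nsr0 HD 0) hMf0.
case: m Hnm => [//|m] Hnm; rewrite ltnS in Hnm.
have Hx' : forall k, (n <= k)%N -> x k.+1 = 0 by move=> k Hk; apply: Hx.
set r := nsr D n (fun k => x k.+1).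
have Hr : forall k, (n <= k)%N -> r k = 0 by move=> k Hk; rewrite /r (nsr_supp HD).
rewrite nsr_S -/r.
rewrite (hMf_add m.+1 (fun j => dl (x 0%N) j - D (r j)) (fun j => - lam r j)).
rewrite (hMf_add m.+1 (dl (x 0%N)) (fun j => - D (r j))).
rewrite hMf_dl hMf_opp hMf_opp hMf_D hMf_lam.
rewrite (@hMf_ge n m.+1 r) ?(leqW Hnm) // (hMf_ge Hnm Hr) IH //.
by apply: functional_extensionality => i; apply: functional_extensionality => j;
   rewrite opprK -addrA addrK.
Qed.

End HM.

Lemma hornerL_T H s : (fun i j => hL H s j i) = hornM (fun u i j => H u j i) s.
Proof.
elim: s => [//|u s IH] /=; rewrite -IH.
by apply: functional_extensionality => i; apply: functional_extensionality => -[|j].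
Qed.

Lemma S1 a b c : (forall i j, Jac a b c i j = 0) -> forall i j, Jac b a c j i = 0.
Proof.
move=> H0.
set G := fun u i j => sub2 (br u c) i j.
have Gadd : forall u v, G (u + v) = fun i j => G u i j + G v i j.
  move=> u v; apply: functional_extensionality => i; apply: functional_extensionality => j.
  by rewrite /G /sub2 badd1 mulrnDl.
have GD : forall u, G (D u) = fun i j => - (LL (G u) i j + MM (G u) i j).
  move=> u; apply: functional_extensionality => i; apply: functional_extensionality => j.
  have := f_equal (fun F => F i j) (Sf_lam (pc (br u c))) => /= <-.
  by rewrite /G /sub2 /Sf bses1 mulNrn.
have GT : forall u, (fun i j => G u j i) = G u.
  move=> u; apply: functional_extensionality => i; apply: functional_extensionality => j.
  rewrite /G /sub2 (addnC j i); have -> : 'C(i + j, j) = 'C(i + j, i) by rewrite -(bin_sub (leq_addr j i)) addKn.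
  by [].  
have Hmid : forall i j, jac_mid br br b a c j i = - jac_mid br br a b c i j.
  move=> i j.
  have := f_equal (fun F => F j i) (mid_hornerL b a c) => /= ->.
  have := f_equal (fun F => F i j) (mid_hornerL a b c) => /= ->.
  rewrite -/G.
  have := f_equal (fun F => F i j) (hornerL_T G (br b a)) => /= ->.
  have -> : (fun u i j => G u j i) = G.
    by apply: functional_extensionality => u; rewrite GT.
  rewrite (hornerM_hMf G) (hornerL_hLf G).
  rewrite -(@hMf_ge G Gadd (size (br b a)) (size (br a b) + size (br b a)) (pc (br b a)) (leq_addl _ _));
    last by move=> k Hk; rewrite pc_ge.
  have -> : pc (br b a) = fun k => - nsr D (size (br a b)) (pc (br a b)) k.
    by apply: functional_extensionality => k; rewrite bskew negsub_nsr.
  rewrite (hMf_opp Gadd) (hMf_nsr Gadd GD) ?leq_addr //.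
  by move=> k Hk; rewrite pc_ge.
move=> i j; have := H0 i j; rewrite /Jac Hmid => H.
by apply/eqP; rewrite -oppr_eq0 !opprD !opprK addrC addrA addrAC H.
Qed.

Lemma jac_mid_addl a a' b c i j :
  jac_mid br br (a + a') b c i j = jac_mid br br a b c i j + jac_mid br br a' b c i j.
Proof. by rewrite /jac_mid -big_split; apply: eq_bigr => k _; rewrite /sub2 badd1 badd1 mulrnDl. Qed.
Lemma jac_mid_addm a b b' c i j :
  jac_mid br br a (b + b') c i j = jac_mid br br a b c i j + jac_mid br br a b' c i j.
Proof. by rewrite /jac_mid -big_split; apply: eq_bigr => k _; rewrite /sub2 badd2 badd1 mulrnDl. Qed.
Lemma jac_mid_addr a b c c' i j :
  jac_mid br br a b (c + c') i j = jac_mid br br a b c i j + jac_mid br br a b c' i j.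
Proof. by rewrite /jac_mid -big_split; apply: eq_bigr => k _; rewrite /sub2 badd2 mulrnDl. Qed.

Lemma Jac_addl a a' b c i j : Jac (a + a') b c i j = Jac a b c i j + Jac a' b c i j.
Proof.
rewrite /Jac badd1 jac_mid_addl badd1 badd2.
by rewrite (lin3 (pc (br a (pc (br b c) j)) i)).
Qed.
Lemma Jac_addm a b b' c i j : Jac a (b + b') c i j = Jac a b c i j + Jac a b' c i j.
Proof.
rewrite /Jac badd1 badd2 jac_mid_addm badd1.
by rewrite (lin3 (pc (br a (pc (br b c) j)) i)).
Qed.
Lemma Jac_addr a b c c' i j : Jac a b (c + c') i j = Jac a b c i j + Jac a b c' i j.
Proof.
rewrite /Jac badd2 badd2 jac_mid_addr badd2 badd2.
by rewrite (lin3 (pc (br a (pc (br b c) j)) i)).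
Qed.

End Br.



Section LB.
Variables (K : pzRingType) (U V W : lmodType K) (br : U -> V -> seq W) (H : lbilinear br).
Lemma lb_addl a a' b j : pc (br (a + a') b) j = pc (br a b) j + pc (br a' b) j.
Proof. by have := H.1 1 a a' b j; rewrite !scale1r. Qed.
Lemma lb_addr a b b' j : pc (br a (b + b')) j = pc (br a b) j + pc (br a b') j.
Proof. by have := H.2 1 a b b' j; rewrite !scale1r. Qed.
Lemma lb_0l b j : pc (br 0 b) j = 0.
Proof. by have := lb_addl 0 0 b j; rewrite addr0 -{1}[pc (br 0 b) j]addr0 => /addrI <-. Qed.
Lemma lb_0r a j : pc (br a 0) j = 0.
Proof. by have := lb_addr a 0 0 j; rewrite addr0 -{1}[pc (br a 0) j]addr0 => /addrI <-. Qed.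
Lemma lb_Nl a b j : pc (br (- a) b) j = - pc (br a b) j.
Proof. by apply/eqP; rewrite -addr_eq0 -lb_addl addNr lb_0l. Qed.
Lemma lb_Nr a b j : pc (br a (- b)) j = - pc (br a b) j.
Proof. by apply/eqP; rewrite -addr_eq0 -lb_addr addNr lb_0r. Qed.
Lemma lb_Zl k a a' b j : pc (br (k *: a + a') b) j = k *: pc (br a b) j + pc (br a' b) j.
Proof. exact: H.1. Qed.
Lemma lb_Zr k a b b' j : pc (br a (k *: b + b')) j = k *: pc (br a b) j + pc (br a b') j.
Proof. exact: H.2. Qed.
End LB.

Lemma negsub_N (K : pzRingType) (L : lmodType K) (D : L -> L) (HD : linear D) (s : seq L) N j :
  (size s <= N)%N -> negsub D s j = nsr D N (pc s) j.
Proof. by move=> H; rewrite negsub_nsr (nsr_ge HD H) // => k Hk; rewrite pc_ge. Qed.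

Lemma pc_mkseq (L : zmodType) (F : nat -> L) N j :
  (forall k, (N <= k)%N -> F k = 0) -> pc (mkseq F N) j = F j.
Proof.
move=> H; rewrite /pc; case: (ltnP j N) => Hj; first by rewrite nth_mkseq.
by rewrite nth_default ?size_mkseq // H.
Qed.

Section NegsubSes.
Variables (K : pzRingType) (L : lmodType K) (D : L -> L) (HD : linear D).

Lemma negsub_fun (s : seq L) N : (size s <= N)%N -> negsub D s = nsr D N (pc s).
Proof. by move=> H; apply: functional_extensionality => j; apply: negsub_N. Qed.

Lemma lam_add (f g : nat -> L) j : lam (fun k => f k + g k) j = lam f j + lam g j.
Proof. by case: j => [|j] //=; rewrite addr0. Qed.
Lemma lam_opp (f : nat -> L) j : lam (fun k => - f k) j = - lam f j.
Proof. by case: j => [|j] //=; rewrite oppr0. Qed.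

Lemma negsub_ses2 (s s' : seq L) :
  (forall k, pc s' k = D (pc s k) + lam (pc s) k) -> forall j, negsub D s' j = - lam (negsub D s) j.
Proof.
move=> H j.
set N' := size s; set N := (size s' + N').+1.
rewrite (negsub_N HD (N := N)); last by rewrite /N ltnW // ltnS leq_addr.
have -> : pc s' = fun k => D (pc s k) + lam (pc s) k by apply: functional_extensionality.
rewrite (nsr_add HD) (nsr_D HD) /N (nsr_lam D) /X1.
rewrite (nsr_zext HD); last by move=> k Hk; rewrite pc_ge // (leq_trans _ Hk) // leq_addl.
rewrite (negsub_fun (N := (size s' + N')%N)) ?leq_addl //.
by rewrite addrA subrr add0r.
Qed.

Lemma negsub_ses1 (s s' : seq L) :
  (forall k, pc s' k = - lam (pc s) k) -> forall j, negsub D s' j = D (negsub D s j) + lam (negsub D s) j.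
Proof.
move=> H j.
set N' := size s; set N := (size s' + N').+1.
rewrite (negsub_N HD (N := N)); last by rewrite /N ltnW // ltnS leq_addr.
have -> : pc s' = fun k => - lam (pc s) k by apply: functional_extensionality.
rewrite (nsr_opp HD) /N (nsr_lam D) /X1.
rewrite (negsub_fun (N := (size s' + N')%N)) ?leq_addl //.
by rewrite opprB opprK addrC.
Qed.
End NegsubSes.

Lemma lin3p (M : zmodType) (x1 x2 x3 y1 y2 y3 : M) :
  (x1 + y1) - (x2 + y2) + (x3 + y3) = (x1 - x2 + x3) + (y1 - y2 + y3).
Proof. by rewrite opprD (addrACA x1) (addrACA (x1 - x2)). Qed.

Lemma nij_alg (K : pzRingType) (V : lmodType K) (f : V -> V) (Hf : linear f)
  (a1 a2 a3 b1 b2 b3 c1 c2 c3 : V) :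
  f (a1 + b1 - f c1) - f (a2 + b2 - f c2) + f (a3 + b3 - f c3) =
  f ((a1 - a2 + a3) + (b1 - b2 + b3) - f (c1 - c2 + c3)).
Proof.
have E : (a1 - a2 + a3) + (b1 - b2 + b3) - f (c1 - c2 + c3) =
         (a1 + b1 - f c1) - (a2 + b2 - f c2) + (a3 + b3 - f c3).
  rewrite (lin3p (a1 + b1)) (lin3p a1); congr (_ + _).
  by rewrite (lfD Hf) (lfB Hf) !opprD !opprK.
by rewrite E [in RHS](lfD Hf) [in RHS](lfB Hf).
Qed.

Section Sum.
Variables (K : pzRingType) (L0 L1 : lmodType K).
Variables (D0 : L0 -> L0) (D1 : L1 -> L1) (t : L1 -> L0)
    (b00 : L0 -> L0 -> seq L0) (b01 : L0 -> L1 -> seq L1) (b10 : L1 -> L0 -> seq L1)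
    (N0 : L0 -> L0) (N1 : L1 -> L1).
Hypothesis S : strict2NLinfty D0 D1 t b00 b01 b10 N0 N1.

Local Notation br := (sum_bracket D1 t b00 b01).
Local Notation sD := (sumD D0 D1).

Let HD0 := s2_D0 S.
Let HD1 := s2_D1 S.
Let Ht := s2_t_lin S.
Let B00 := s2_b00_bil S.
Let B01 := s2_b01_bil S.
Let B10 := s2_b10_bil S.

Lemma pc_sum p m q n j : pc (br (p, m) (q, n)) j =
  (pc (b00 p q) j, pc (b01 p n) j - negsub D1 (b01 q m) j + pc (b01 (t m) n) j).
Proof.
rewrite /sum_bracket pc_mkseq // => k Hk.
have H1 : (size (b00 p q) <= k)%N.
  by apply: leq_trans Hk; rewrite -!addnA leq_addr.
have H2 : (size (b01 p n) <= k)%N.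
  by apply: leq_trans Hk; rewrite -!addnA (addnCA (size (b00 p q))) leq_addr.
have H3 : (size (b01 q m) <= k)%N.
  by apply: leq_trans Hk; rewrite addnC addnA leq_addl.
have H4 : (size (b01 (t m) n) <= k)%N.
  by apply: leq_trans Hk; rewrite leq_addl.
by rewrite !pc_ge // negsub_nsr (nsr_supp HD1) // subrr addr0.
Qed.

Lemma pc_sumf p m q n : pc (br (p, m) (q, n)) = fun j =>
  (pc (b00 p q) j, pc (b01 p n) j - negsub D1 (b01 q m) j + pc (b01 (t m) n) j).
Proof. by apply: functional_extensionality => j; rewrite pc_sum. Qed.

Lemma sD_lin : linear sD.
Proof. by move=> a [p m] [q n]; rewrite /sumD /= HD0 HD1. Qed.

Lemma br_bil : lbilinear br.
Proof.
split.
- move=> k [p m] [p' m'] [q n] j.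
  have -> : k *: ((p, m) : L0 * L1) + (p', m') = (k *: p + p', k *: m + m') by [].
  rewrite !pc_sum /=; congr pair; first exact: (lb_Zl B00).
  rewrite (lb_Zl B01) (lfD Ht) (lfZ Ht) (lb_Zl B01).
  set N := (size (b01 q (k *: m + m')) + size (b01 q m) + size (b01 q m'))%N.
  rewrite !(negsub_N HD1 (N := N)); try by rewrite /N; lia.
  have -> : pc (b01 q (k *: m + m')) = fun i => k *: pc (b01 q m) i + pc (b01 q m') i.
    by apply: functional_extensionality => i; rewrite (lb_Zr B01).
  rewrite (nsr_lin HD1) lin3p.
  have -> : forall (x : L0) (y : L1), (k *: ((x, y) : L0 * L1)).2 = k *: y by [].
  by rewrite scalerDr scalerBr.
- move=> k [p m] [q n] [q' n'] j.
  have -> : k *: ((q, n) : L0 * L1) + (q', n') = (k *: q + q', k *: n + n') by [].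
  rewrite !pc_sum /=; congr pair; first exact: (lb_Zr B00).
  rewrite (lb_Zr B01) (lb_Zr B01).
  set N := (size (b01 (k *: q + q') m) + size (b01 q m) + size (b01 q' m))%N.
  rewrite !(negsub_N HD1 (N := N)); try by rewrite /N; lia.
  have -> : pc (b01 (k *: q + q') m) = fun i => k *: pc (b01 q m) i + pc (b01 q' m) i.
    by apply: functional_extensionality => i; rewrite (lb_Zl B01).
  rewrite (nsr_lin HD1) lin3p.
  have -> : forall (x : L0) (y : L1), (k *: ((x, y) : L0 * L1)).2 = k *: y by [].
  by rewrite scalerDr scalerBr.
Qed.

Lemma lam_pair (f : nat -> L0) (g : nat -> L1) j :
  lam (fun k => ((f k, g k) : L0 * L1)) j = (lam f j, lam g j).
Proof. by case: j. Qed.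

Lemma br_ses : sesquilinear sD sD sD br.
Proof.
split.
- move=> [p m] [q n] j.
  have -> : sD (p, m) = (D0 p, D1 m) by [].
  rewrite pc_sum pc_sumf lam_pair /=; congr pair; first exact: (s2_b00_ses S).1.
  rewrite (s2_t_D S) !(s2_b01_ses S).1.
  rewrite (negsub_ses2 HD1 (s := b01 q m)); last by move=> k; rewrite (s2_b01_ses S).2.
  by rewrite !lam_add !lam_opp !opprD !opprK.
- move=> [p m] [q n] j.
  have -> : sD (q, n) = (D0 q, D1 n) by [].
  rewrite pc_sum pc_sumf lam_pair /=; congr pair; first exact: (s2_b00_ses S).2.
  rewrite !(s2_b01_ses S).2.
  rewrite (negsub_ses1 HD1 (s := b01 q m)); last by move=> k; rewrite (s2_b01_ses S).1.
  rewrite /sumD /= !lam_add !lam_opp (lfD HD1) (lfB HD1).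
  by rewrite lin3p.
Qed.

Lemma fst_lin : linear (fun x : L0 * L1 => x.1).
Proof. by move=> a [p m] [q n]. Qed.
Lemma snd_lin : linear (fun x : L0 * L1 => x.2).
Proof. by move=> a [p m] [q n]. Qed.

Lemma negsub_pair (s : seq (L0 * L1)) j :
  negsub sD s j = (nsr D0 (size s) (fun k => (pc s k).1) j, nsr D1 (size s) (fun k => (pc s k).2) j).
Proof.
rewrite negsub_nsr [LHS]surjective_pairing.
rewrite (nsr_comm (T := fun x : L0 * L1 => x.1) (D' := D0) fst_lin) //.
by rewrite (nsr_comm (T := fun x : L0 * L1 => x.2) (D' := D1) snd_lin).
Qed.

Lemma size_br p m q n : size (br (p, m) (q, n)) =
  (size (b00 p q) + size (b01 p n) + size (b01 q m) + size (b01 (t m) n))%N.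
Proof. by rewrite /sum_bracket size_mkseq. Qed.

Lemma br_skew a b j : pc (br a b) j = - negsub sD (br b a) j.
Proof.
case: a => p m; case: b => q n.
rewrite negsub_pair size_br !pc_sumf /=.
set N := (size (b00 q p) + size (b01 q m) + size (b01 p n) + size (b01 (t n) m))%N.
congr pair.
  by rewrite (s2_skew00 S) (negsub_N HD0 (N := N)) // /N; lia.
rewrite (nsr_add HD1) (nsr_sub HD1).
rewrite -(negsub_N HD1) ?/N; last by lia.
rewrite (negsub_fun HD1 (s := b01 p n) (N := size (b01 p n))) //.
rewrite (nsr_invol HD1); last 2 first.
- by rewrite /N; lia.
- by move=> k Hk; rewrite pc_ge.
rewrite -/N -(@nsr_ge _ _ _ HD1 N (N + size (b10 n (t m))) (pc (b01 (t n) m)) (leq_addr _ _));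
  last by move=> k Hk; rewrite pc_ge // (leq_trans _ Hk) // /N; lia.
have -> : pc (b01 (t n) m) = pc (b10 n (t m)).
  by apply: functional_extensionality => k; rewrite (s2_t_sym S).
rewrite -(negsub_N HD1) ?leq_addl //.
rewrite [pc (b01 (t m) n) j](s2_skew01 S).
by rewrite /= opprD opprB.
Qed.

Local Notation sN := (sumN N0 N1).

Lemma sN_lin : linear sN.
Proof. by move=> a [p m] [q n]; rewrite /sumN /= (s2_N0_lin S) (s2_N1_lin S). Qed.

Lemma br_nij : is_Nijenhuis sD br sN.
Proof.
split; first exact: sN_lin.
  by move=> [p m]; rewrite /sumN /sumD /= (s2_N0_D S) (s2_N1_D S).
move=> [p m] [q n] j.
have HN1 := s2_N1_lin S.
rewrite /sumN /= !pc_sum /=; congr pair; first by rewrite (s2_N0 S).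
rewrite !(s2_tN S).
rewrite -[pc (b01 (N0 p) (N1 n)) j](s2_N1 S) -[pc (b01 (N0 (t m)) (N1 n)) j](s2_N1 S).
set N := (size (b01 (N0 q) (N1 m)) + size (b01 (N0 q) m) + size (b01 q (N1 m)) + size (b01 q m))%N.
rewrite !(negsub_N HD1 (N := N)); try by rewrite /N; lia.
have -> : pc (b01 (N0 q) (N1 m)) = fun k => N1 (pc (b01 (N0 q) m) k + pc (b01 q (N1 m)) k
     - N1 (pc (b01 q m) k)).
  by apply: functional_extensionality => k; rewrite (s2_N1 S).
rewrite -(nsr_comm (D := D1) (T := N1) (D' := D1) HN1 (s2_N1_D S)).
rewrite (nsr_sub HD1) (nsr_add HD1) -(nsr_comm (D := D1) (T := N1) (D' := D1) HN1 (s2_N1_D S)).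
rewrite [nsr D1 N (pc (b01 (N0 q) m)) j + _]addrC.
by rewrite nij_alg.
Qed.

Lemma negsub_zero (L : lmodType K) (D : L -> L) (HD : linear D) (s : seq L) j :
  (forall k, pc s k = 0) -> negsub D s j = 0.
Proof.
move=> H; rewrite negsub_nsr.
have -> : pc s = fun _ => 0 by apply: functional_extensionality.
by rewrite (nsr0 HD).
Qed.

Lemma pc00 p q j : pc (br (p, 0) (q, 0)) j = (pc (b00 p q) j, 0).
Proof.
rewrite pc_sum (lb_0r B01) (negsub_zero HD1) ?(lf0 Ht) ?(lb_0l B01) ?subrr ?addr0 //.
by move=> k; rewrite (lb_0r B01).
Qed.
Lemma pc01 p n j : pc (br (p, 0) (0, n)) j = (0, pc (b01 p n) j).
Proof.
rewrite pc_sum (lb_0r B00) (negsub_zero HD1) ?(lf0 Ht) ?(lb_0l B01) ?subr0 ?addr0 //.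
by move=> k; rewrite (lb_0l B01).
Qed.
Lemma pc10 m q j : pc (br (0, m) (q, 0)) j = (0, - negsub D1 (b01 q m) j).
Proof. by rewrite pc_sum (lb_0l B00) (lb_0l B01) (lb_0r B01) sub0r addr0. Qed.
Lemma pc11 m n j : pc (br (0, m) (0, n)) j = (0, pc (b01 (t m) n) j).
Proof.
rewrite pc_sum (lb_0l B00) (lb_0l B01) (negsub_zero HD1) ?subr0 ?add0r //.
by move=> k; rewrite (lb_0l B01).
Qed.

Lemma pair_sum n (F : 'I_n -> L0 * L1) :
  \sum_(l < n) F l = (\sum_(l < n) (F l).1, \sum_(l < n) (F l).2).
Proof.
rewrite [LHS]surjective_pairing; congr pair.
  by apply: (big_morph (fun x : L0 * L1 => x.1)).
by apply: (big_morph (fun x : L0 * L1 => x.2)).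
Qed.

Lemma pair_mulrn (x : L0) (y : L1) n : ((x, y) : L0 * L1) *+ n = (x *+ n, y *+ n).
Proof. elim: n => [//|n IH]; by rewrite !mulrS IH. Qed.

Lemma jm_pair a b c i j : jac_mid br br a b c i j =
  (\sum_(l < i.+1) (pc (br (pc (br a b) l) c) (i - l + j)%N).1 *+ 'C(i - l + j, i - l),
   \sum_(l < i.+1) (pc (br (pc (br a b) l) c) (i - l + j)%N).2 *+ 'C(i - l + j, i - l)).
Proof.
rewrite /jac_mid /sub2 pair_sum; congr pair; apply: eq_bigr => l _;
  by rewrite [pc _ _]surjective_pairing pair_mulrn.
Qed.

Lemma jm_def (A B C E : zmodType) (b1 : A -> B -> seq C) (b2 : C -> E -> seq E) x y z i j :
  jac_mid b1 b2 x y z i j = \sum_(l < i.+1) pc (b2 (pc (b1 x y) l) z) (i - l + j)%N *+ 'C(i - l + j, i - l).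
Proof. by []. Qed.

Local Notation J := (Jac br).

Lemma pairJ (x1 x2 x3 : L0) (y1 y2 y3 : L1) :
  ((x1, y1) : L0 * L1) - (x2, y2) - (x3, y3) = (x1 - x2 - x3, y1 - y2 - y3).
Proof. by []. Qed.
Lemma pair_eq0 (x : L0) (y : L1) : x = 0 -> y = 0 -> ((x, y) : L0 * L1) = 0.
Proof. by move=> -> ->. Qed.

Lemma J000 p q r i j : J (p, 0) (q, 0) (r, 0) i j = 0.
Proof.
rewrite /Jac jm_pair !pc00 pairJ; apply: pair_eq0.
  under eq_bigr => l _ do rewrite !pc00 /=.
  by have := (s2_jac000 S p q r i j); rewrite jm_def.
under eq_bigr => l _ do rewrite !pc00 /= mul0rn.
by rewrite big1_eq !subr0.
Qed.

Lemma J001 p q k i j : J (p, 0) (q, 0) (0, k) i j = 0.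
Proof.
rewrite /Jac jm_pair !pc01 pairJ; apply: pair_eq0.
  under eq_bigr => l _ do rewrite pc00 pc01 /= mul0rn.
  by rewrite big1_eq !subr0.
under eq_bigr => l _ do rewrite pc00 pc01 /=.
by have := (s2_jac001 S p q k i j); rewrite jm_def.
Qed.

Lemma J011 p n k i j : J (p, 0) (0, n) (0, k) i j = 0.
Proof.
rewrite /Jac jm_pair !pc11 !pc01 ?pc11 pairJ; apply: pair_eq0.
  under eq_bigr => l _ do rewrite pc01 pc11 /= mul0rn.
  by rewrite big1_eq !subr0.
under eq_bigr => l _ do rewrite pc01 pc11 /= (s2_t_br S).
by have := (s2_jac001 S p (t n) k i j); rewrite jm_def.
Qed.

Lemma J111 m n k i j : J (0, m) (0, n) (0, k) i j = 0.
Proof.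
rewrite /Jac jm_pair !pc11 pairJ; apply: pair_eq0.
  under eq_bigr => l _ do rewrite !pc11 /= mul0rn.
  by rewrite big1_eq !subr0.
under eq_bigr => l _ do rewrite !pc11 /= (s2_t_br S).
by have := (s2_jac001 S (t m) (t n) k i j); rewrite jm_def.
Qed.

Lemma t_negsub m q l : t (- negsub D1 (b01 q m) l) = pc (b00 (t m) q) l.
Proof.
set N := (size (b01 q m) + size (b00 q (t m)))%N.
rewrite (lfN Ht) (negsub_N HD1 (N := N)) ?leq_addr //.
rewrite (nsr_comm (D' := D0) Ht (s2_t_D S)).
have -> : (fun k => t (pc (b01 q m) k)) = pc (b00 q (t m)).
  by apply: functional_extensionality => k; rewrite (s2_t_br S).
by rewrite -(negsub_N HD0) ?leq_addl // -(s2_skew00 S).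
Qed.

Lemma J101 m q k i j : J (0, m) (q, 0) (0, k) i j = 0.
Proof.
rewrite /Jac jm_pair !pc01 !pc11 ?pc01 pairJ; apply: pair_eq0.
  under eq_bigr => l _ do rewrite pc10 pc11 /= mul0rn.
  by rewrite big1_eq !subr0.
under eq_bigr => l _ do rewrite pc10 pc11 /= t_negsub.
by have := (s2_jac001 S (t m) q k i j); rewrite jm_def.
Qed.

Lemma badd1 a a' b j : pc (br (a + a') b) j = pc (br a b) j + pc (br a' b) j.
Proof. exact: (lb_addl br_bil). Qed.
Lemma badd2 a b b' j : pc (br a (b + b')) j = pc (br a b) j + pc (br a b') j.
Proof. exact: (lb_addr br_bil). Qed.

Lemma J010 p n r i j : J (p, 0) (0, n) (r, 0) i j = 0.
Proof.
apply: (S2 sD_lin badd1 badd2 br_ses.2 br_skew) => i' j'; exact: J001.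
Qed.

Lemma J100 m q r i j : J (0, m) (q, 0) (r, 0) i j = 0.
Proof.
apply: (S1 sD_lin badd1 br_ses.1 br_skew) => i' j'; exact: J010.
Qed.

Lemma J110 m n r i j : J (0, m) (0, n) (r, 0) i j = 0.
Proof.
apply: (S2 sD_lin badd1 badd2 br_ses.2 br_skew) => i' j'; exact: J101.
Qed.

Lemma J_all a b c i j : J a b c i j = 0.
Proof.
have E : forall x : L0 * L1, x = (x.1, 0) + (0, x.2).
  move=> [x y] /=; have -> : ((x, 0) : L0 * L1) + (0, y) = (x + 0, 0 + y) by []. by rewrite addr0 add0r.
rewrite (E a) (E b) (E c).
rewrite !(Jac_addl badd1 badd2) !(Jac_addm badd1 badd2) !(Jac_addr badd2).
by rewrite J000 J001 J010 J011 J100 J101 J110 J111 !addr0.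
Qed.

Lemma sum_main : is_NijenhuisLCA sD br sN.
Proof.
split; last exact: br_nij.
split.
- exact: sD_lin.
- exact: br_bil.
- exact: br_ses.
- exact: br_skew.
- move=> a b c i j; have := J_all a b c i j; rewrite /Jac.
  by move/eqP; rewrite subr_eq0 subr_eq addrC => /eqP.
Qed.

End Sum.

Theorem proposition4p11 (L0 L1 : lmodType Cplx)
    (D0 : L0 -> L0) (D1 : L1 -> L1) (t : L1 -> L0)
    (b00 : L0 -> L0 -> seq L0) (b01 : L0 -> L1 -> seq L1) (b10 : L1 -> L0 -> seq L1)
    (N0 : L0 -> L0) (N1 : L1 -> L1) :
  strict2NLinfty D0 D1 t b00 b01 b10 N0 N1 ->
  is_NijenhuisLCA (sumD D0 D1) (sum_bracket D1 t b00 b01) (sumN N0 N1).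
Proof. by move=> S; apply: sum_main S. Qed.
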